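(* Let $\mathcal{A}$ be a finite-dimensional bialgebra over $\mathbb{C}$ with multiplication written by juxtaposition, unit $1_{\mathcal{A}}$, comultiplication $\Delta$ and counit $\epsilon$. Let $\rho:\mathcal{A}\to M_{d_\rho}(\mathbb{C})$ be a $d_\rho$-dimensional representation with matrix entries $\rho_{ab}(x)$, and let $(v_{ij})_{1\le i,j\le d_v}$ be a $d_v$-dimensional corepresentation of $\mathcal{A}$. Fix a basis $B(\mathcal{A})$ of $\mathcal{A}$ with dual basis $\{\delta_x\}_{x\in B(\mathcal{A})}$ of $\mathcal{A}^*$, $\delta_x(y)=\delta_{x,y}$. For $a,b\in\{1,\dots,d_\rho\}$, $i,j\in\{1,\dots,d_v\}$, $x,y\in B(\mathcal{A})$ define $$U^{ab}_{ij}=\rho_{ab}(v_{ij}),\quad R^{yx}_{ab}=(\delta_y\otimes\rho_{ab})(\Delta(x)),\quad V^{yx}_{ij}=\delta_y(x\,v_{ij}),\quad u_x=\delta_x(1_{\mathcal{A}}),\quad e_x=\epsilon(x).$$ Then for all $a,b,i,j,x,y$: (1) $\sum_{z\in B(\mathcal{A})}R^{yz}_{ab}V^{zx}_{ij}=\sum_{z\in B(\mathcal{A})}\sum_{k=1}^{d_v}\sum_{c=1}^{d_\rho}V^{yz}_{ik}\,R^{zx}_{ac}\,U^{cb}_{kj}$; (2) $\sum_{y\in B(\mathcal{A})}e_y V^{yx}_{ij}=\delta_{ij}\,e_x$; (3) $\sum_{x\in B(\mathcal{A})}R^{yx}_{ab}u_x=\delta_{ab}\,u_y$; (4) $\sum_{x\in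 B(\mathcal{A})}e_xu_x=1$.
   Context: A bialgebra is a unital associative algebra and a coassociative counital coalgebra such that $\Delta(xy)=\Delta(x)\Delta(y)$, $\Delta(1)=1\otimes1$ and $\epsilon(xy)=\epsilon(x)\epsilon(y)$. A $d$-dimensional representation is a linear map $\rho:\mathcal{A}\to M_d(\mathbb{C})$ with $\rho(1)=\mathbb{1}$ and $\rho(xy)=\rho(x)\rho(y)$. A $d$-dimensional corepresentation is a $d\times d$ matrix $(v_{ij})$ of elements of $\mathcal{A}$ with $\Delta(v_{ij})=\sum_{k=1}^d v_{ik}\otimes v_{kj}$ and $\epsilon(v_{ij})=\delta_{ij}$. *)

(* Defs.v *)
From HB Require Import structures.
From mathcomp Require Import all_boot all_order all_algebra.
From mathcomp Require Import all_field.
From mathcomp Require Import complex.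
From mathcomp Require Import Rstruct.
Set Implicit Arguments. Unset Strict Implicit. Unset Printing Implicit Defensive.
Import Order.TTheory GRing.Theory Num.Theory.
Local Open Scope ring_scope.

Definition C : fieldType := (Rdefinitions.R : rcfType)[i].

Section Bialg.
Variable A : falgType C.

Definition lin_fun (phi : A -> C) : Prop :=
  forall (a : C) (x y : A), phi (a *: x + y) = a * phi x + phi y.

(* An element of A (x) A is represented by a finite list of pure tensors
   [:: (x1,y1); ...; (xk,yk)] standing for  sum_i x_i (x) y_i.
   (phi (x) psi) applied to such a tensor: *)
Definition tev (phi psi : A -> C) (s : seq (A * A)) : C :=
  \sum_(p <- s) phi p.1 * psi p.2.

(* Equality in A (x) A: two tensors are equal iff all pure functionals
   phi (x) psi (phi, psi linear) agree on them (A is finite dimensional). *)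
Definition teq (s t : seq (A * A)) : Prop :=
  forall phi psi, lin_fun phi -> lin_fun psi -> tev phi psi s = tev phi psi t.

Definition tmul (s t : seq (A * A)) : seq (A * A) :=
  [seq (p.1 * q.1, p.2 * q.2) | p <- s, q <- t].

Record is_bialgebra (Delta : A -> seq (A * A)) (eps : A -> C) : Prop := {
  bi_Delta_lin : forall (a : C) (x y : A),
      teq (Delta (a *: x + y)) ([seq (a *: p.1, p.2) | p <- Delta x] ++ Delta y);
  (* coassociativity: (Delta (x) id) Delta = (id (x) Delta) Delta,
     tested on all pure functionals phi (x) psi (x) chi *)
  bi_coassoc : forall (x : A) (phi psi chi : A -> C),
      lin_fun phi -> lin_fun psi -> lin_fun chi ->
      \sum_(p <- Delta x) tev phi psi (Delta p.1) * chi p.2 =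
      \sum_(p <- Delta x) phi p.1 * tev psi chi (Delta p.2);
  bi_eps_lin : lin_fun eps;
  bi_counitl : forall x : A, \sum_(p <- Delta x) eps p.1 *: p.2 = x;
  bi_counitr : forall x : A, \sum_(p <- Delta x) eps p.2 *: p.1 = x;
  bi_Delta_mul : forall x y : A, teq (Delta (x * y)) (tmul (Delta x) (Delta y));
  bi_Delta_1 : teq (Delta 1) [:: (1, 1)];
  bi_eps_mul : forall x y : A, eps (x * y) = eps x * eps y
}.

Record is_representation (d : nat) (rho : A -> 'M[C]_d) : Prop := {
  rep_lin : forall (a : C) (x y : A), rho (a *: x + y) = a *: rho x + rho y;
  rep_1 : rho 1 = 1%:M;
  rep_mul : forall x y : A, rho (x * y) = rho x *m rho y
}.

Record is_corepresentation (Delta : A -> seq (A * A)) (eps : A -> C)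
    (d : nat) (v : 'I_d -> 'I_d -> A) : Prop := {
  corep_Delta : forall i j : 'I_d,
      teq (Delta (v i j)) [seq (v i k, v k j) | k <- enum 'I_d];
  corep_eps : forall i j : 'I_d, eps (v i j) = (i == j)%:R
}.

End Bialg.

(* Main.v *)
Require Import Defs.
From HB Require Import structures.
From mathcomp Require Import all_boot all_order all_algebra all_field.
Import Order.TTheory GRing.Theory Num.Theory.
Local Open Scope ring_scope.

Section Helpers.
Variable A : falgType C.

Lemma lin0 (phi : A -> C) : lin_fun phi -> phi 0 = 0.
Proof.
move=> H; have := H 1 0 0; rewrite scaler0 addr0 mul1r.
by move=> /(congr1 (fun t => t - phi 0)); rewrite subrr addrK.
Qed.

Lemma linD (phi : A -> C) : lin_fun phi -> forall x y, phi (x + y) = phi x + phi y.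
Proof. by move=> H x y; have := H 1 x y; rewrite scale1r mul1r. Qed.

Lemma linZ (phi : A -> C) : lin_fun phi -> forall a x, phi (a *: x) = a * phi x.
Proof. by move=> H a x; have := H a x 0; rewrite addr0 lin0 // addr0. Qed.

Lemma lin_sum (phi : A -> C) (I : Type) (r : seq I) (P : pred I) (F : I -> A) :
  lin_fun phi -> phi (\sum_(i <- r | P i) F i) = \sum_(i <- r | P i) phi (F i).
Proof.
move=> H; elim: r => [|x r IH]; first by rewrite !big_nil lin0.
by rewrite !big_cons; case: (P x) => //; rewrite linD // IH.
Qed.

Lemma lin_expand (phi : A -> C) n (X : n.-tuple A) (w : A) :
  lin_fun phi -> basis_of fullv X ->
  phi w = \sum_(z < n) coord X z w * phi (tnth X z).
Proof.
move=> H B; rewrite {1}(coord_basis B (memvf w)) lin_sum //.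
by apply: eq_bigr => z _; rewrite linZ // (tnth_nth 0).
Qed.

Lemma lin_coord n (X : n.-tuple A) y : lin_fun (coord X y).
Proof. by move=> a x z; rewrite linearD linearZ. Qed.

Lemma lin_comp (f : {linear A -> A}) (phi : A -> C) : lin_fun phi -> lin_fun (phi \o f).
Proof. by move=> H a x z; rewrite /= linearD linearZ H. Qed.

Lemma lin_rho dr (rho : A -> 'M[C]_dr) a b :
  is_representation rho -> lin_fun (fun z => rho z a b).
Proof. by move=> [H _ _] c x z; rewrite H !mxE. Qed.

Lemma tev_lin (Delta : A -> seq (A * A)) eps phi psi :
  is_bialgebra Delta eps -> lin_fun phi -> lin_fun psi ->
  lin_fun (fun w => tev phi psi (Delta w)).
Proof.
move=> Hb Hp Hq a x y; rewrite (bi_Delta_lin Hb a x y) //.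
rewrite /tev big_cat /= big_map big_distrr /=.
by under eq_bigr do rewrite (linZ _ Hp) -mulrA.
Qed.

End Helpers.

Section Helpers2.
Variable A : falgType C.
Lemma lin_lmul (phi : A -> C) (p : A) : lin_fun phi -> lin_fun (fun w => phi (p * w)).
Proof. by move=> H a x z; rewrite mulrDr -scalerAr H. Qed.
Lemma lin_rmul (phi : A -> C) (p : A) : lin_fun phi -> lin_fun (fun w => phi (w * p)).
Proof. by move=> H a x z; rewrite mulrDl -scalerAl H. Qed.
End Helpers2.

Theorem theorem1 (A : falgType C) (Delta : A -> seq (A * A)) (eps : A -> C)
    (n : nat) (X : n.-tuple A)
    (dr : nat) (rho : A -> 'M[C]_dr)
    (dv : nat) (v : 'I_dv -> 'I_dv -> A) :
  is_bialgebra Delta eps ->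
  is_representation rho ->
  is_corepresentation Delta eps v ->
  basis_of fullv X ->
  let U := fun (a b : 'I_dr) (i j : 'I_dv) => rho (v i j) a b in
  let R := fun (y x : 'I_n) (a b : 'I_dr) =>
             \sum_(p <- Delta (tnth X x)) coord X y p.1 * rho p.2 a b in
  let V := fun (y x : 'I_n) (i j : 'I_dv) => coord X y (tnth X x * v i j) in
  let u := fun x : 'I_n => coord X x 1 in
  let e := fun x : 'I_n => eps (tnth X x) in
  [/\ (forall (a b : 'I_dr) (i j : 'I_dv) (x y : 'I_n),
         \sum_(z < n) R y z a b * V z x i j =
         \sum_(z < n) \sum_(k < dv) \sum_(c < dr)
            V y z i k * R z x a c * U c b k j),
      (forall (i j : 'I_dv) (x : 'I_n),
         \sum_(y < n) e y * V y x i j = (i == j)%:R * e x),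
      (forall (a b : 'I_dr) (y : 'I_n),
         \sum_(x < n) R y x a b * u x = (a == b)%:R * u y)
    & \sum_(x < n) e x * u x = 1].
Proof.
move=> Hb Hr Hc HB U R V u e.
have Heps := bi_eps_lin Hb.
have eps1 : eps 1 = 1.
  have h := bi_eps_mul Hb 1 1; rewrite mulr1 in h.
  have [e0|en0] := eqVneq (eps 1) 0.
    have := oner_neq0 A; rewrite -{1}(bi_counitl Hb 1) big1 ?eqxx // => p _.
    by rewrite -[p.1]mulr1 (bi_eps_mul Hb) e0 mulr0 scale0r.
  by apply: (mulfI en0); rewrite mulr1.
have HF : forall y a b, lin_fun (fun w => tev (coord X y) (fun z => rho z a b) (Delta w)).
  by move=> y a b; apply: tev_lin; [exact: Hb | exact: lin_coord | exact: lin_rho].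
split.
- move=> a b i j x y.
  transitivity (tev (coord X y) (fun z => rho z a b) (Delta (tnth X x * v i j))).
    rewrite (lin_expand _ _ _ X _ (HF y a b) HB).
    by apply: eq_bigr => z _; rewrite mulrC.
  rewrite (bi_Delta_mul Hb _ _ (lin_coord _ _ X y) (lin_rho _ _ _ a b Hr)).
  rewrite /tev /tmul big_allpairs_dep /=.
  transitivity (\sum_(p <- Delta (tnth X x)) \sum_(c < dr) \sum_(k < dv)
     (rho p.2 a c * coord X y (p.1 * v i k) * U c b k j : C)).
    apply: eq_bigr => p _.
    transitivity (\sum_(c < dr) rho p.2 a c * tev (fun w => coord X y (p.1 * w))
                       (fun w => rho w c b) (Delta (v i j))).
      rewrite /tev.
      rewrite (eq_bigr (fun q => \sum_(c < dr) rho p.2 a c * (coord X y (p.1 * q.1) * rho q.2 c b))); last first.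
        move=> q _; rewrite (rep_mul Hr) mxE mulr_sumr; apply: eq_bigr => c _.
        by rewrite mulrCA.
      rewrite exchange_big; apply: eq_bigr => c _.
      by rewrite mulr_sumr.
    apply: eq_bigr => c _.
    rewrite (corep_Delta Hc i j (lin_lmul _ _ p.1 (lin_coord _ _ X y)) (lin_rho _ _ _ c b Hr)).
    rewrite /tev big_map big_enum /= big_distrr; apply: eq_bigr => k _.
    by rewrite -[RHS]mulrA.
  have inner : forall k c, \sum_(z < n) (V y z i k * R z x a c : C) =
      \sum_(p <- Delta (tnth X x)) rho p.2 a c * coord X y (p.1 * v i k).
    move=> k c; rewrite /V /R.
    under eq_bigr do rewrite big_distrr.
    rewrite exchange_big /=; apply: eq_bigr => p _.
    rewrite (lin_expand _ _ _ X p.1 (lin_rmul _ _ (v i k) (lin_coord _ _ X y)) HB).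
    rewrite big_distrr; apply: eq_bigr => z _ /=.
    by rewrite [RHS]mulrCA [LHS]mulrCA (mulrC (coord X y _)).
  symmetry.
  transitivity (\sum_(z < n) \sum_(k < dv) \sum_(c < dr) (V y z i k * R z x a c * U c b k j : C)); first by [].
  transitivity (\sum_(k < dv) \sum_(c < dr) ((\sum_(z < n) (V y z i k * R z x a c : C)) * U c b k j : C)).
    rewrite exchange_big; apply: eq_bigr => k _.
    rewrite exchange_big; apply: eq_bigr => c _.
    by rewrite big_distrl.
  under eq_bigr do under eq_bigr do rewrite inner mulr_suml.
  rewrite [LHS]exchange_big.
  rewrite [RHS]exchange_big; apply: eq_bigr => c _.
  by rewrite [RHS]exchange_big.
- move=> i j x.
  transitivity (eps (tnth X x * v i j)).
    rewrite (lin_expand _ _ _ X (tnth X x * v i j) Heps HB).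
    by apply: eq_bigr => y _; rewrite mulrC.
  by rewrite (bi_eps_mul Hb) (corep_eps Hc) mulrC.
- move=> a b y.
  transitivity (tev (coord X y) (fun z => rho z a b) (Delta 1)).
    rewrite (lin_expand _ _ _ X 1 (HF y a b) HB).
    by apply: eq_bigr => x _; rewrite mulrC.
  rewrite (bi_Delta_1 Hb (lin_coord _ _ X y) (lin_rho _ _ _ a b Hr)) /tev big_seq1 /=.
  by rewrite (rep_1 Hr) mxE mulrC.
- rewrite -eps1 (lin_expand _ _ _ X 1 Heps HB).
  by apply: eq_bigr => x _; rewrite mulrC.
Qed.
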